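(* View a section $P\in\Gamma(D^*\otimes D^* )$ as the $\mathcal A$-valued 1-form $X\mapsto P(X_D,\cdot)\in D^*$ and let $\Box=\partial\partial^*+\partial^*\partial$. Then on symmetric bilinear forms on $D$: if $P$ is symmetric, trace-free and $\sum_{s=1}^3P(I_s\cdot,I_s\cdot)=-P$, then $\Box P=4(n+2)P$; if $P$ is symmetric, trace-free and $\sum_{s=1}^3P(I_s\cdot,I_s\cdot)=3P$, then $\Box P=4(n+4)P$; and $\Box g=8(n+2)g$.
   Context: Setup. $M$ has dimension $4n+3$ with qc structure $(D,Q,[g])$: $D\subset TM$ of rank $4n$, $Q$ locally spanned by almost complex structures $I_1,I_2,I_3$ on $D$ with $I_1I_2=-I_2I_1=I_3$, $g$ a fixed metric in the conformal class on $D$, locally $D=\ker\eta^1\cap\ker\eta^2\cap\ker\eta^3$ with $d\eta^a(u,v)=2g(I_au,v)$ on $D$, and Reeb fields $\xi_a$ with $\eta^b(\xi_a)=\delta^b_a$, $(\xi_a\lrcorner d\eta^b)|_D=-(\xi_b\lrcorner d\eta^a)|_D$; $V=\mathrm{span}(\xi_a)$, $TM=V\oplus D$; $\eta^1,\eta^2,\eta^3$ also denote the dual basis of $V^*$. $(r,s,t)$ is a cyclic permutation of $(1,2,3)$; $I_0=\mathrm{Id}_D$. $\mathfrak{sp}(D,g)$ = $g$-skew endomorphisms commuting with all $I_s$; $\mathrm{End}_0(D)=\{q_0\mathrm{Id}+\sum_sq_sI_s+A_0:A_0\in\mathfrak{sp}(D,g)\}$. Algebraic bracket. Let $\mathcal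 A=V\oplus D\oplus\mathrm{End}_0(D)\oplus D^*\oplus V^*$, graded in degrees $-2,-1,0,1,2$. The bracket $\{\cdot,\cdot\}$ on $\mathcal A$ is fiberwise, bilinear, skew-symmetric, additive in degrees, zero whenever the total degree lies outside $[-2,2]$, and given for $u,v\in D$, $\varphi,\psi\in D^*$, $\Phi=\sum_{s=0}^3q_sI_s+\Phi_0$ ($\Phi_0\in\mathfrak{sp}(D,g)$), $\Psi\in\mathrm{End}_0(D)$, $\xi=\sum a_s\xi_s\in V$, $\eta=\sum b_s\eta^s\in V^*$, by: $\{u,v\}=-2\sum_sg(I_su,v)\xi_s$; $\{\Phi,u\}=\Phi(u)$; $\{\Phi,\Psi\}=\Phi\Psi-\Psi\Phi$; $\{\Phi,\xi\}=2q_0\xi+2\sum_{(r,s,t)}(q_ra_s-q_sa_r)\xi_t$; $\{\Phi,\varphi\}=-\varphi\circ\Phi$; $\{\Phi_0,\eta\}=0$, $\{I_0,\eta\}=-2\eta$, $\{I_r,\eta^s\}=-\{I_s,\eta^r\}=2\eta^t$, $\{I_r,\eta^r\}=0$; $\{u,\varphi\}=\varphi(u)I_0-\sum_{s=1}^3\varphi(I_su)I_s+u\wedge_{I_0}\varphi-\sum_{s=1}^3u\wedge_{I_s}\varphi$ with $(u\wedge_{I_s}\varphi)(v)=\varphi(I_sv)I_su-g(u,I_sv)I_s\varphi^\sharp$; $\{\xi,\eta\}=2\sum_sa_sb_sI_0-2\sum_{(r,s,t)}(a_rb_s-a_sb_r)I_t$; $\{\xi,\varphi\}=\sum_sa_sI_s(\varphi^\sharp)$;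 $\{\varphi,\psi\}=-\sum_s\varphi(I_s\psi^\sharp)\eta^s$; $\{v,\eta\}=2\sum_sb_sg(I_sv,\cdot)$. (Sums over $(r,s,t)$ are over cyclic permutations; $\varphi^\sharp$ is the $g$-dual vector.) Differential and codifferential. Let $(\epsilon_i)=(\xi_1,\xi_2,\xi_3,e_1,\dots,e_{4n})$ with $(e_a)$ a $g$-orthonormal frame of $D$, and $(\epsilon^i)=(\eta^1,\eta^2,\eta^3,e^1,\dots,e^{4n})$ its dual frame (identifying $TM\cong V\oplus D$ and $T^*M\cong V^*\oplus D^*$). For a section $s$ of $\mathcal A$: $(\partial s)(X)=\{X,s\}$. For an $\mathcal A$-valued 1-form $\phi$: $\partial^*\phi=\sum_i\{\epsilon^i,\phi(\epsilon_i)\}$ and $(\partial\phi)(X,Y)=\{X,\phi(Y)\}-\{Y,\phi(X)\}-\phi(\{X,Y\}_-)$. For an $\mathcal A$-valued 2-form $K$: $(\partial^*K)(X)=\sum_i\{\epsilon^i,K(\epsilon_i,X)\}+\frac12\sum_iK(\{\epsilon^i,X\}_-,\epsilon_i)$. Here $(\cdot)_-$ denotes the $V\oplus D$ component, and $X,Y\in TM\cong V\oplus D$. *)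

(* Defs.v *)
(* Fiberwise (pointwise) model of the algebraic bracket on
   A = V + D + End_0(D) + D^* + V^* of a quaternionic contact structure. *)
From HB Require Import structures.
From mathcomp Require Import all_boot all_order all_algebra.
Set Implicit Arguments.
Unset Strict Implicit.
Unset Printing Implicit Defensive.
Import Order.TTheory GRing.Theory Num.Theory.
Local Open Scope ring_scope.

Section QCBracket.
Variable R : realFieldType.
Variable n : nat.
(* I i is I_(i+1), i.e. I 0 = I_1, I 1 = I_2, I 2 = I_3, acting on column
   vectors of D = R^(4n) written in a g-orthonormal frame (e_a). *)
Variable I : 'I_3 -> 'M[R]_(4 * n).

Local Notation N := (4 * n)%N.

Definition Vt := 'cV[R]_3.          (* V   : coordinates a_s w.r.t. xi_s   *)
Definition Dt := 'cV[R]_N.          (* D   : coordinates w.r.t. e_a        *)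
Definition Et := 'M[R]_N.           (* End_0(D) (matrices in frame e_a)    *)
Definition Dst := 'cV[R]_N.         (* D^* : coordinates w.r.t. e^a        *)
Definition Vst := 'cV[R]_3.         (* V^* : coordinates b_s w.r.t. eta^s  *)

Definition Alg := ((((Vt * Dt) * Et) * Dst) * Vst)%type.
Definition Tan := (Vt * Dt)%type.

Definition aV (x : Alg) : Vt := x.1.1.1.1.
Definition aD (x : Alg) : Dt := x.1.1.1.2.
Definition aE (x : Alg) : Et := x.1.1.2.
Definition aDs (x : Alg) : Dst := x.1.2.
Definition aVs (x : Alg) : Vst := x.2.
Definition mkA (a : Vt) (u : Dt) (F : Et) (p : Dst) (b : Vst) : Alg :=
  ((((a, u), F), p), b).

(* g(u,v) with g the standard inner product in the orthonormal frame;
   a covector phi acts by phi(u) = dot phi u, and phi^# = phi. *)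
Definition dot (k : nat) (u v : 'cV[R]_k) : R := (u^T *m v) 0 0.

(* (r,s,t) cyclic permutations of (1,2,3): for t, r = t+1, s = t+2 (mod 3) *)
Definition nx (t : 'I_3) : 'I_3 := t + 1.
Definition nx2 (t : 'I_3) : 'I_3 := t + 1 + 1.

(* sum_{(r,s,t) cyclic} (q_r a_s - q_s a_r) xi_t *)
Definition cross (q a : 'cV[R]_3) : 'cV[R]_3 :=
  \col_(t < 3) (q (nx t) 0 * a (nx2 t) 0 - q (nx2 t) 0 * a (nx t) 0).

(* The coefficients q_0,...,q_3 of Phi = q_0 Id + sum_s q_s I_s + Phi_0,
   Phi_0 in sp(D,g), extracted by the trace pairing (valid on End_0(D)). *)
Definition q0 (F : Et) : R := \tr F / N%:R.
Definition qv (F : Et) : 'cV[R]_3 := \col_(s < 3) (- \tr (I s *m F) / N%:R).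

Definition brDD (u v : Dt) : Vt := \col_(s < 3) (-2 * dot (I s *m u) v).
Definition brEV (F : Et) (a : Vt) : Vt := (2 * q0 F) *: a + 2%:R *: cross (qv F) a.
Definition brEVs (F : Et) (b : Vst) : Vst := (-2 * q0 F) *: b + 2%:R *: cross (qv F) b.
(* {Phi, phi} = - phi o Phi *)
Definition brEDs (F : Et) (p : Dst) : Dst := - (F^T *m p).
(* u wedge_{I_s} phi : v |-> phi(I_s v) I_s u - g(u, I_s v) I_s phi^# *)
Definition wedgeJ (J : Et) (u : Dt) (p : Dst) : Et :=
  J *m (u *m p^T) *m J - J *m (p *m u^T) *m J.
Definition brDDs (u : Dt) (p : Dst) : Et :=
  dot p u *: 1%:M - \sum_(s < 3) dot p (I s *m u) *: I s
  + wedgeJ 1%:M u p - \sum_(s < 3) wedgeJ (I s) u p.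
Definition brVVs (a : Vt) (b : Vst) : Et :=
  (2 * dot a b) *: 1%:M - 2%:R *: \sum_(t < 3) cross a b t 0 *: I t.
Definition brVDs (a : Vt) (p : Dst) : Dt := \sum_(s < 3) a s 0 *: (I s *m p).
Definition brDsDs (p r : Dst) : Vst := \col_(s < 3) (- dot p (I s *m r)).
Definition brDVs (v : Dt) (b : Vst) : Dst := 2%:R *: \sum_(s < 3) b s 0 *: (I s *m v).

(* ---- the full bracket: bilinear, skew, additive in degrees, zero outside
   total degree [-2,2] ---- *)
Definition br (x y : Alg) : Alg :=
  mkA
    (brDD (aD x) (aD y) + brEV (aE x) (aV y) - brEV (aE y) (aV x))
    (aE x *m aD y - aE y *m aD x + brVDs (aV x) (aDs y) - brVDs (aV y) (aDs x))
    (aE x *m aE y - aE y *m aE x + brDDs (aD x) (aDs y) - brDDs (aD y) (aDs x)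
      + brVVs (aV x) (aVs y) - brVVs (aV y) (aVs x))
    (brEDs (aE x) (aDs y) - brEDs (aE y) (aDs x)
      + brDVs (aD x) (aVs y) - brDVs (aD y) (aVs x))
    (brEVs (aE x) (aVs y) - brEVs (aE y) (aVs x) + brDsDs (aDs x) (aDs y)).

Definition ofTan (X : Tan) : Alg := mkA X.1 X.2 0 0 0.
Definition minus (x : Alg) : Tan := (aV x, aD x).

Definition epsV (s : 'I_3) : Tan := (delta_mx s 0, 0).
Definition epsD (a : 'I_N) : Tan := (0, delta_mx a 0).
Definition epsVs (s : 'I_3) : Alg := mkA 0 0 0 0 (delta_mx s 0).
Definition epsDs (a : 'I_N) : Alg := mkA 0 0 0 (delta_mx a 0) 0.

Definition form1 := Tan -> Alg.
Definition form2 := Tan -> Tan -> Alg.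

Definition d0 (s : Alg) : form1 := fun X => br (ofTan X) s.
Definition dstar1 (phi : form1) : Alg :=
  \sum_(s < 3) br (epsVs s) (phi (epsV s)) + \sum_(a < N) br (epsDs a) (phi (epsD a)).
Definition d1 (phi : form1) : form2 := fun X Y =>
  br (ofTan X) (phi Y) - br (ofTan Y) (phi X) - phi (minus (br (ofTan X) (ofTan Y))).
Definition dstar2 (K : form2) : form1 := fun X =>
  \sum_(s < 3) br (epsVs s) (K (epsV s) X) + \sum_(a < N) br (epsDs a) (K (epsD a) X)
  + 2%:R^-1 *: (\sum_(s < 3) K (minus (br (epsVs s) (ofTan X))) (epsV s)
                + \sum_(a < N) K (minus (br (epsDs a) (ofTan X))) (epsD a)).

Definition Box (phi : form1) : form1 := fun X => d0 (dstar1 phi) X + dstar2 (d1 phi) X.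

(* a bilinear form P on D (P(u,v) = u^T P v) viewed as the A-valued 1-form
   X |-> P(X_D, .) in D^* *)
Definition formP (P : 'M[R]_N) : form1 := fun X => mkA 0 0 0 (P^T *m X.2) 0.

End QCBracket.

Definition qc_fibre (R : realFieldType) (n : nat) (I : 'I_3 -> 'M[R]_(4 * n)) : Prop :=
  (forall s, (I s)^T = - I s) /\
  (forall s, I s *m I s = - 1%:M) /\
  I 0 *m I 1 = I 2 /\ I 1 *m I 0 = - I 2.

(* Main.v *)
From Stdlib Require Import Lia.
Require Import Defs.
From HB Require Import structures.
From mathcomp Require Import all_boot all_order all_algebra.
Set Implicit Arguments.
Unset Strict Implicit.
Unset Printing Implicit Defensive.
Import Order.TTheory GRing.Theory Num.Theory.
Local Open Scope ring_scope.
Section P.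
Variable R : realFieldType.
Variable n : nat.
Variable I : 'I_3 -> 'M[R]_(4 * n).
Local Notation N := (4 * n)%N.
Hypothesis Iskew : forall s, (I s)^T = - I s.
Hypothesis Isq : forall s, I s *m I s = - 1%:M.

Lemma Alg_eq (x y : Alg R n) : aV x = aV y -> aD x = aD y -> aE x = aE y -> aDs x = aDs y -> aVs x = aVs y -> x = y.
Proof. by case: x => [[[[? ?] ?] ?] ?]; case: y => [[[[? ?] ?] ?] ?]; rewrite /aV /aD /aE /aDs /aVs /= => -> -> -> -> ->. Qed.
Lemma mkA_add a u F p b a' u' F' p' b' : mkA a u F p b + mkA a' u' F' p' b' = mkA (a + a') (u + u') (F + F') (p + p') (b + b') :> Alg R n.
Proof. by []. Qed.
Lemma mkA_opp a u F p b : - mkA a u F p b = mkA (- a) (- u) (- F) (- p) (- b) :> Alg R n.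
Proof. by []. Qed.
Lemma mkA_scale c a u F p b : c *: mkA a u F p b = mkA (c *: a) (c *: u) (c *: F) (c *: p) (c *: b) :> Alg R n.
Proof. by []. Qed.
Lemma mkA0 : mkA 0 0 0 0 0 = 0 :> Alg R n.
Proof. by []. Qed.
Lemma dot0l k (u : 'cV[R]_k) : dot 0 u = 0. Proof. by rewrite /dot trmx0 mul0mx mxE. Qed.
Lemma dot0r k (u : 'cV[R]_k) : dot u 0 = 0. Proof. by rewrite /dot mulmx0 mxE. Qed.
Lemma cross0l (a : 'cV[R]_3) : cross 0 a = 0.
Proof. by apply/matrixP => i j; rewrite !mxE !mul0r subr0. Qed.
Lemma cross0r (a : 'cV[R]_3) : cross a 0 = 0.
Proof. by apply/matrixP => i j; rewrite !mxE !mulr0 subr0. Qed.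
Lemma q00 : q0 (0 : 'M[R]_N) = 0. Proof. by rewrite /q0 mxtrace0 mul0r. Qed.
Lemma qv0 : qv I 0 = 0.
Proof. by apply/matrixP => i j; rewrite !mxE mulmx0 mxtrace0 oppr0 mul0r. Qed.
Lemma brDD0l u : brDD I 0 u = 0.
Proof. by apply/matrixP => i j; rewrite !mxE mulmx0 dot0l mulr0. Qed.
Lemma brDD0r u : brDD I u 0 = 0.
Proof. by apply/matrixP => i j; rewrite !mxE dot0r mulr0. Qed.
Lemma brEV0l a : brEV I 0 a = 0.
Proof. by rewrite /brEV q00 qv0 cross0l mulr0 !scale0r scaler0 addr0. Qed.
Lemma brEV0r F : brEV I F 0 = 0.
Proof. by rewrite /brEV cross0r !scaler0 addr0. Qed.
Lemma brEVs0l a : brEVs I 0 a = 0.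
Proof. by rewrite /brEVs q00 qv0 cross0l mulr0 !scale0r scaler0 addr0. Qed.
Lemma brEVs0r F : brEVs I F 0 = 0.
Proof. by rewrite /brEVs cross0r !scaler0 addr0. Qed.
Lemma brEDs0l (p : 'cV[R]_N) : brEDs 0 p = 0.
Proof. by rewrite /brEDs trmx0 mul0mx oppr0. Qed.
Lemma brEDs0r (F : 'M[R]_N) : brEDs F 0 = 0.
Proof. by rewrite /brEDs mulmx0 oppr0. Qed.
Lemma wedgeJ0l (J : 'M[R]_N) p : wedgeJ J 0 p = 0.
Proof. by rewrite /wedgeJ trmx0 mul0mx mulmx0 !mulmx0 !mul0mx subr0. Qed.
Lemma wedgeJ0r (J : 'M[R]_N) p : wedgeJ J p 0 = 0.
Proof. by rewrite /wedgeJ trmx0 mul0mx mulmx0 !mulmx0 !mul0mx subr0. Qed.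
Lemma brDDs0l p : brDDs I 0 p = 0.
Proof.
rewrite /brDDs dot0r scale0r sub0r wedgeJ0l.
rewrite (@big1 _ _ _ _ _ _ (fun s => dot p (I s *m 0) *: I s)); last by move=> s _; rewrite mulmx0 dot0r scale0r.
rewrite (@big1 _ _ _ _ _ _ (fun s => wedgeJ (I s) 0 p)); last by move=> s _; rewrite wedgeJ0l.
by rewrite !oppr0 !addr0.
Qed.
Lemma brDDs0r p : brDDs I p 0 = 0.
Proof.
rewrite /brDDs dot0l scale0r sub0r wedgeJ0r.
rewrite (@big1 _ _ _ _ _ _ (fun s => dot 0 (I s *m p) *: I s)); last by move=> s _; rewrite dot0l scale0r.
rewrite (@big1 _ _ _ _ _ _ (fun s => wedgeJ (I s) p 0)); last by move=> s _; rewrite wedgeJ0r.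
by rewrite !oppr0 !addr0.
Qed.
Lemma brVVs0l b : brVVs I 0 b = 0.
Proof.
rewrite /brVVs dot0l mulr0 scale0r sub0r big1 ?scaler0 ?oppr0 // => t _.
by rewrite cross0l mxE scale0r.
Qed.
Lemma brVVs0r b : brVVs I b 0 = 0.
Proof.
rewrite /brVVs dot0r mulr0 scale0r sub0r big1 ?scaler0 ?oppr0 // => t _.
by rewrite cross0r mxE scale0r.
Qed.
Lemma brVDs0l p : brVDs I 0 p = 0.
Proof. by rewrite /brVDs big1 // => s _; rewrite mxE scale0r. Qed.
Lemma brVDs0r p : brVDs I p 0 = 0.
Proof. by rewrite /brVDs big1 // => s _; rewrite mulmx0 scaler0. Qed.
Lemma brDsDs0l p : brDsDs I 0 p = 0.
Proof. by apply/matrixP => i j; rewrite !mxE dot0l oppr0. Qed.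
Lemma brDsDs0r p : brDsDs I p 0 = 0.
Proof. by apply/matrixP => i j; rewrite !mxE mulmx0 dot0r oppr0. Qed.
Lemma brDVs0l p : brDVs I 0 p = 0.
Proof. by rewrite /brDVs big1 ?scaler0 // => s _; rewrite mulmx0 scaler0. Qed.
Lemma brDVs0r p : brDVs I p 0 = 0.
Proof. by rewrite /brDVs big1 ?scaler0 // => s _; rewrite mxE scale0r. Qed.
Local Notation e a := (delta_mx a 0 : 'cV[R]_N).

Lemma sum_ee : \sum_(a < N) e a *m (e a)^T = 1%:M.
Proof.
under eq_bigr do rewrite trmx_delta mul_delta_mx.
apply/matrixP => i j; rewrite summxE !mxE (bigD1 i) //= mxE eqxx /= big1 ?addr0.
  by rewrite eq_sym.
by move=> k /negbTE ki; rewrite mxE eq_sym ki.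
Qed.
Lemma m11T (A : 'M[R]_1) : A^T = A.
Proof. by apply/matrixP => i j; rewrite !ord1 mxE. Qed.
Lemma ete a : (e a)^T *m e a = 1%:M.
Proof. by rewrite trmx_delta mul_delta_mx; apply/matrixP => i j; rewrite !ord1 !mxE. Qed.
Lemma F3' k (Y : 'M[R]_(k, N)) (z : 'cV[R]_N) : \sum_(a < N) Y *m e a *m ((e a)^T *m z) = Y *m z.
Proof.
have H : forall a, Y *m e a *m ((e a)^T *m z) = Y *m (e a *m (e a)^T) *m z by move=> a; rewrite !mulmxA.
by under eq_bigr do rewrite H; rewrite -mulmx_suml -mulmx_sumr sum_ee mulmx1.
Qed.
Lemma F3 k (Y : 'M[R]_(k, N)) (x : 'rV[R]_N) : \sum_(a < N) Y *m e a *m (x *m e a) = Y *m x^T.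
Proof.
have H : forall a, x *m e a = (e a)^T *m x^T by move=> a; rewrite -[x *m e a]m11T trmx_mul.
by under eq_bigr do rewrite H; rewrite F3'.
Qed.
Lemma eMe (M : 'M[R]_N) a : (e a)^T *m M *m e a = (M a a)%:M.
Proof. by rewrite trmx_delta -rowE -colE; apply/matrixP => i j; rewrite !ord1 !mxE eqxx mulr1n. Qed.
Lemma sum_eMe (M : 'M[R]_N) : \sum_(a < N) (e a)^T *m M *m e a = (\tr M)%:M.
Proof.
under eq_bigr do rewrite eMe.
by apply/matrixP => i j; rewrite !ord1 summxE !mxE eqxx mulr1n; apply: eq_bigr => a _; rewrite mxE eqxx mulr1n.
Qed.

Definition G (M : 'M[R]_N) : 'M[R]_N := \tr M *: 1%:M - \sum_(s < 3) \tr (I s *m M) *: I s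
  + (M - M^T) - \sum_(s < 3) I s *m (M - M^T) *m I s.

Lemma lin4 (V : zmodType) (t t' a a' k k' b b' : V) :
  t + t' - (a + a') + (k + k') - (b + b') = t - a + k - b + (t' - a' + k' - b').
Proof. by rewrite !opprD (addrACA t) (addrACA (t - a)) (addrACA (t - a + k)). Qed.
Lemma G_D M M' : G (M + M') = G M + G M'.
Proof.
have E1 : \sum_(s < 3) \tr (I s *m (M + M')) *: I s = \sum_(s < 3) \tr (I s *m M) *: I s + \sum_(s < 3) \tr (I s *m M') *: I s.
  by rewrite -big_split; apply: eq_bigr => s _; rewrite mulmxDr linearD scalerDl.
have E2 : M + M' - (M + M')^T = (M - M^T) + (M' - M'^T) by rewrite linearD opprD addrACA.
have E3 : \sum_(s < 3) I s *m ((M - M^T) + (M' - M'^T)) *m I s = \sum_(s < 3) I s *m (M - M^T) *m I s + \sum_(s < 3) I s *m (M' - M'^T) *m I s.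
  by rewrite -big_split; apply: eq_bigr => s _; rewrite mulmxDr mulmxDl.
by rewrite /G E2 E3 E1 linearD /= scalerDl lin4.
Qed.
Lemma G_0 : G 0 = 0.
Proof. have h := G_D 0 0; rewrite addr0 -{1}[G 0]addr0 in h; exact: esym (addrI _ h). Qed.
Lemma G_N M : G (- M) = - G M.
Proof. by apply/eqP; rewrite -subr_eq0 opprK -G_D addNr G_0. Qed.
Lemma G_sum (F : 'I_N -> 'M[R]_N) : \sum_(a < N) G (F a) = G (\sum_(a < N) F a).
Proof. by rewrite (big_morph G G_D G_0). Qed.
Lemma tr11 (A : 'M[R]_1) : \tr A = A 0 0. Proof. by rewrite /mxtrace big_ord1. Qed.
Lemma brDDs_G u p : brDDs I u p = G (u *m p^T).
Proof.
have d1: dot p u = \tr (u *m p^T). by rewrite /dot mxtrace_mulC; symmetry; apply: tr11.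
have d2: forall s, dot p (I s *m u) = \tr (I s *m (u *m p^T)).
  by move=> s; rewrite /dot !mulmxA mxtrace_mulC mulmxA; symmetry; apply: tr11.
have t1: (u *m p^T)^T = p *m u^T by rewrite trmx_mul trmxK.
rewrite /brDDs /G /wedgeJ d1 t1 !mul1mx !mulmx1; congr (_ - _ + _ - _).
  by apply: eq_bigr => s _; rewrite d2.
by apply: eq_bigr => s _; rewrite mulmxBr mulmxBl.
Qed.
Lemma sc11 k (v : 'M[R]_(k, 1)) (A : 'M[R]_1) : v *m A = \tr A *: v.
Proof. by rewrite {1}[A]mx11_scalar mul_mx_scalar tr11. Qed.
Lemma trN (A : 'M[R]_N) : (- A)^T = - A^T.
Proof. by apply/matrixP => i j; rewrite !mxE. Qed.
Lemma trZ c (A : 'M[R]_N) : (c *: A)^T = c *: A^T.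
Proof. by apply/matrixP => i j; rewrite !mxE. Qed.
Lemma skewconj s (K : 'M[R]_N) : K^T = - K -> (I s *m K *m I s)^T = - (I s *m K *m I s).
Proof. by move=> hK; rewrite !trmx_mul hK Iskew !mulNmx !mulmxN !opprK mulmxA. Qed.
Lemma Grank1 (x y v : 'cV[R]_N) : (G (x *m y^T))^T *m v =
  v *m (y^T *m x) + \sum_(s < 3) (I s *m v) *m (y^T *m I s *m x) - x *m (y^T *m v) + y *m (x^T *m v)
  + \sum_(s < 3) (I s *m x *m (y^T *m I s *m v) - I s *m y *m (x^T *m I s *m v)).
Proof.
have hK : (x *m y^T - y *m x^T)^T = - (x *m y^T - y *m x^T).
  by rewrite linearB /= !trmx_mul !trmxK opprB.
rewrite /G !linearB !linearD /= !linear_sum /= !linearZ /= trmx1 trmx_mul trmxK.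
rewrite (eq_bigr (fun i => \tr (I i *m (x *m y^T)) *: I i)); last first.
  by move=> i _; rewrite (trN (_ *: _)) trZ Iskew scalerN opprK.
rewrite (eq_bigr (fun i => I i *m (x *m y^T - y *m x^T) *m I i) (F1 := fun i => - (I i *m (x *m y^T - y *m x^T) *m I i)^T)) /=; last first.
  by move=> i _; rewrite (skewconj i hK) opprK.
rewrite (trN (_ *m _)) trmx_mul trmxK.
rewrite !mulmxDl !mulmx_suml -scalemxAl mul1mx mxtrace_mulC -sc11.
rewrite (eq_bigr (fun i => I i *m v *m (y^T *m I i *m x))); last first.
  by move=> i _; rewrite -scalemxAl mulmxA mxtrace_mulC -sc11 (mulmxA y^T).
rewrite (eq_bigr (fun i => I i *m x *m (y^T *m I i *m v) - I i *m y *m (x^T *m I i *m v))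
   (F1 := fun i => I i *m (x *m y^T - y *m x^T) *m I i *m v)); last first.
  by move=> i _; rewrite mulmxBr mulmxBl mulmxBl !mulmxA.
rewrite mulNmx !mulmxA [in LHS]addrA.
by rewrite [in LHS](addrAC _ (y *m x^T *m v)).
Qed.
Lemma selfneg (x : R) : x = - x -> x = 0.
Proof.
move=> h; have : x *+ 2 == 0 by rewrite mulr2n {2}h subrr.
by rewrite mulrn_eq0 /= => /eqP.
Qed.
Lemma trI s : \tr (I s) = 0.
Proof. by apply: selfneg; rewrite -{1}mxtrace_tr Iskew raddfN. Qed.
Lemma trPI (P : 'M[R]_N) s : P^T = P -> \tr (P *m I s) = 0.
Proof.
move=> hP; apply: selfneg.
by rewrite -{1}mxtrace_tr trmx_mul Iskew hP mulNmx raddfN mxtrace_mulC.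
Qed.
Lemma F3e (x : 'rV[R]_N) : \sum_(a < N) e a *m (x *m e a) = x^T.
Proof. by rewrite -[RHS]mul1mx -F3; apply: eq_bigr => a _; rewrite mul1mx. Qed.
Lemma F3'e (z : 'cV[R]_N) : \sum_(a < N) e a *m ((e a)^T *m z) = z.
Proof. by rewrite -[RHS]mul1mx -F3'; apply: eq_bigr => a _; rewrite mul1mx. Qed.
Lemma IIT s (w : 'cV[R]_N) : I s *m (w^T *m I s)^T = w.
Proof. by rewrite trmx_mul trmxK Iskew mulNmx mulmxN mulmxA Isq mulNmx mul1mx opprK. Qed.

Lemma LA (w : 'cV[R]_N) : \sum_(a < N) (G (e a *m w^T))^T *m e a = w *+ (N + 6).
Proof.
under eq_bigr do rewrite Grank1.
rewrite !big_split /= sumrN F3e trmxK.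
rewrite exchange_big /=.
rewrite (eq_bigr (fun=> w)); last by move=> s _; rewrite F3 IIT.
rewrite (eq_bigr (fun=> w) (F1 := fun a => w *m ((e a)^T *m e a))); last by move=> a _; rewrite ete mulmx1.
rewrite exchange_big /=.
rewrite (eq_bigr (fun=> w) (F1 := fun s => \sum_(a < N) (I s *m e a *m (w^T *m I s *m e a) - I s *m w *m ((e a)^T *m I s *m e a)))); last first.
  by move=> s _; rewrite sumrB F3 IIT -mulmx_sumr sum_eMe trI -scalemx1 scale0r mulmx0 subr0.
rewrite !sumr_const !card_ord (addrAC w) subrr add0r -!mulrnDr.
by rewrite (addnC 3%N) -addnA.
Qed.
Lemma lin5 (V : zmodType) (a S t : V) : a + S - t + a + S = a + a + (S + S) - t.
Proof. by rewrite (addrAC (a + S) (- t) a) (addrAC (a + S + a) (- t) S) (addrAC a S a) -(addrA (a + a)). Qed.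
Lemma LB (P : 'M[R]_N) (u : 'cV[R]_N) : P^T = P ->
  \sum_(a < N) (G (u *m (P *m e a)^T))^T *m e a =
  (P *m u) *+ 2 + ((\sum_(s < 3) I s *m P *m I s) *m u) *+ 2 - \tr P *: u.
Proof.
move=> hP.
under eq_bigr do rewrite Grank1.
rewrite !big_split /= sumrN.
rewrite (eq_bigr (fun a => e a *m ((e a)^T *m (P *m u))) (F1 := fun a => e a *m ((P *m e a)^T *m u))); last first.
  by move=> a _; rewrite trmx_mul hP !mulmxA.
rewrite F3'e.
rewrite (eq_bigr (fun a => u *m ((e a)^T *m P *m e a)) (F1 := fun a => u *m ((P *m e a)^T *m e a))); last first.
  by move=> a _; rewrite trmx_mul hP !mulmxA.
rewrite -mulmx_sumr sum_eMe mul_mx_scalar.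
rewrite (eq_bigr (fun a => P *m e a *m (u^T *m e a)) (F1 := fun a => P *m e a *m (u^T *m e a))) //.
rewrite F3 trmxK.
rewrite exchange_big /=.
rewrite (eq_bigr (fun s => I s *m P *m I s *m u) (F1 := fun s => \sum_(a < N) I s *m e a *m ((P *m e a)^T *m I s *m u))); last first.
  move=> s _; rewrite (eq_bigr (fun a => I s *m e a *m ((e a)^T *m (P *m I s *m u)))); last first.
    by move=> a _; rewrite trmx_mul hP !mulmxA.
  by rewrite F3' !mulmxA.
rewrite exchange_big /=.
rewrite (eq_bigr (fun s => I s *m P *m I s *m u) (F1 := fun s => \sum_(a < N) (I s *m u *m ((P *m e a)^T *m I s *m e a) - I s *m (P *m e a) *m (u^T *m I s *m e a)))); last first.
  move=> s _; rewrite sumrB.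
  rewrite (eq_bigr (fun a => I s *m u *m ((e a)^T *m (P *m I s) *m e a))); last first.
    by move=> a _; rewrite trmx_mul hP !mulmxA.
  rewrite -mulmx_sumr sum_eMe trPI // -scalemx1 scale0r mulmx0 sub0r.
  rewrite (eq_bigr (fun a => I s *m P *m e a *m (u^T *m I s *m e a))); last first.
    by move=> a _; rewrite !mulmxA.
  rewrite F3 trmx_mul trmxK Iskew mulNmx mulmxN opprK.
  by rewrite !mulmxA.
by rewrite mulmx_suml !mulr2n lin5.
Qed.
Ltac zs := rewrite ?brDD0l ?brDD0r ?brEV0l ?brEV0r ?brEVs0l ?brEVs0r ?brEDs0l ?brEDs0r ?brDDs0l ?brDDs0r ?brVVs0l ?brVVs0r ?brVDs0l ?brVDs0r ?brDsDs0l ?brDsDs0r ?brDVs0l ?brDVs0r ?mulmx0 ?mul0mx ?subrr ?subr0 ?sub0r ?addr0 ?add0r ?oppr0.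
Local Notation e3 s := (delta_mx s 0 : 'cV[R]_3).

Lemma br_x0 (x : Alg R n) : br I x (mkA 0 0 0 0 0) = mkA 0 0 0 0 0.
Proof. rewrite /br /mkA /aV /aD /aE /aDs /aVs /=. zs. by []. Qed.
Lemma br_phi (X : Tan R n) p : br I (ofTan X) (mkA 0 0 0 p 0) = mkA 0 (brVDs I X.1 p) (brDDs I X.2 p) 0 0.
Proof. rewrite /br /ofTan /mkA /aV /aD /aE /aDs /aVs /=. zs. by []. Qed.
Lemma br_epsDs_p a p : br I (epsDs R a) (mkA 0 0 0 p 0) = mkA 0 0 0 0 (brDsDs I (e a) p).
Proof. rewrite /br /epsDs /mkA /aV /aD /aE /aDs /aVs /=. zs. by []. Qed.
Lemma minus_TT (X Y : Tan R n) : minus (br I (ofTan X) (ofTan Y)) = (brDD I X.2 Y.2, 0).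
Proof. rewrite /br /minus /ofTan /mkA /aV /aD /aE /aDs /aVs /=. zs. by []. Qed.
Lemma br_epsVs_D s v : br I (epsVs R n s) (mkA 0 v 0 0 0) = mkA 0 0 0 (- brDVs I v (e3 s)) 0.
Proof. rewrite /br /epsVs /mkA /aV /aD /aE /aDs /aVs /=. zs. by []. Qed.
Lemma br_epsDs_DE a d E : br I (epsDs R a) (mkA 0 d E 0 0) = mkA 0 0 (- brDDs I d (e a)) (- brEDs E (e a)) 0.
Proof. rewrite /br /epsDs /mkA /aV /aD /aE /aDs /aVs /=. zs. by []. Qed.
Lemma minus_Vs s (X : Tan R n) : minus (br I (epsVs R n s) (ofTan X)) = (0, 0).
Proof. rewrite /br /minus /epsVs /ofTan /mkA /aV /aD /aE /aDs /aVs /=. zs. by []. Qed.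
Lemma minus_Ds a (X : Tan R n) : minus (br I (epsDs R a) (ofTan X)) = (0, - brVDs I X.1 (e a)).
Proof. rewrite /br /minus /epsDs /ofTan /mkA /aV /aD /aE /aDs /aVs /=. zs. by []. Qed.
Lemma Kd1 (P : 'M[R]_N) (Y Z : Tan R n) : d1 I (formP P) Y Z =
  mkA 0 (brVDs I Y.1 (P^T *m Z.2) - brVDs I Z.1 (P^T *m Y.2)) (brDDs I Y.2 (P^T *m Z.2) - brDDs I Z.2 (P^T *m Y.2)) 0 0.
Proof.
rewrite /d1 /formP !br_phi minus_TT /= mulmx0 !mkA_opp !mkA_add.
by rewrite !oppr0 !addr0.
Qed.
Lemma aVD (x y : Alg R n) : aV (x + y) = aV x + aV y. Proof. by []. Qed.
Lemma aDD (x y : Alg R n) : aD (x + y) = aD x + aD y. Proof. by []. Qed.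
Lemma aED (x y : Alg R n) : aE (x + y) = aE x + aE y. Proof. by []. Qed.
Lemma aDsD (x y : Alg R n) : aDs (x + y) = aDs x + aDs y. Proof. by []. Qed.
Lemma aVsD (x y : Alg R n) : aVs (x + y) = aVs x + aVs y. Proof. by []. Qed.
Lemma aVZ c (x : Alg R n) : aV (c *: x) = c *: aV x. Proof. by []. Qed.
Lemma aDZ c (x : Alg R n) : aD (c *: x) = c *: aD x. Proof. by []. Qed.
Lemma aEZ c (x : Alg R n) : aE (c *: x) = c *: aE x. Proof. by []. Qed.
Lemma aDsZ c (x : Alg R n) : aDs (c *: x) = c *: aDs x. Proof. by []. Qed.
Lemma aVsZ c (x : Alg R n) : aVs (c *: x) = c *: aVs x. Proof. by []. Qed.
Lemma aVm a u F p b : aV (mkA a u F p b : Alg R n) = a. Proof. by []. Qed.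
Lemma aDm a u F p b : aD (mkA a u F p b : Alg R n) = u. Proof. by []. Qed.
Lemma aEm a u F p b : aE (mkA a u F p b : Alg R n) = F. Proof. by []. Qed.
Lemma aDsm a u F p b : aDs (mkA a u F p b : Alg R n) = p. Proof. by []. Qed.
Lemma aVsm a u F p b : aVs (mkA a u F p b : Alg R n) = b. Proof. by []. Qed.
Lemma mkA_sum k (a : 'I_k -> Vt R) (u : 'I_k -> Dt R n) (F : 'I_k -> Et R n) (p : 'I_k -> Dst R n) (b : 'I_k -> Vst R) :
  \sum_(i < k) mkA (a i) (u i) (F i) (p i) (b i) = mkA (\sum_(i < k) a i) (\sum_(i < k) u i) (\sum_(i < k) F i) (\sum_(i < k) p i) (\sum_(i < k) b i).
Proof.
elim: k a u F p b => [|k IH] a u F p b; first by rewrite !big_ord0.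
by rewrite !big_ord_recr /= IH mkA_add.
Qed.
Lemma brVDs_J (x : 'cV[R]_3) p : brVDs I x p = (\sum_(s < 3) x s 0 *: I s) *m p.
Proof. by rewrite /brVDs mulmx_suml; apply: eq_bigr => s _; rewrite scalemxAl. Qed.
Lemma brVDs_e s p : brVDs I (e3 s) p = I s *m p.
Proof.
rewrite /brVDs (bigD1 s) //= mxE eqxx scale1r big1 ?addr0 // => t /negbTE ts.
by rewrite mxE ts scale0r.
Qed.
Lemma brDVs_e s v : brDVs I v (e3 s) = 2%:R *: (I s *m v).
Proof.
rewrite /brDVs (bigD1 s) //= mxE eqxx scale1r big1 ?addr0 // => t /negbTE ts.
by rewrite mxE ts scale0r.
Qed.
Lemma JT (x : 'cV[R]_3) : (\sum_(s < 3) x s 0 *: I s)^T = - \sum_(s < 3) x s 0 *: I s.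
Proof.
apply/matrixP => i j; rewrite !mxE !summxE; apply/eqP; rewrite -subr_eq0 opprK -big_split /=.
rewrite big1 //= => s _.
have := congr1 (fun M : 'M[R]_N => M j i) (Iskew s); rewrite !mxE.
by move=> ->; rewrite mulrN subrr.
Qed.
Lemma dot_eMe (M : 'M[R]_N) a : dot (e a) (M *m e a) = M a a.
Proof. by rewrite /dot mulmxA eMe mxE eqxx mulr1n. Qed.
Lemma dstar1_0 (P : 'M[R]_N) : P^T = P -> dstar1 I (formP P) = mkA 0 0 0 0 0.
Proof.
move=> hP; rewrite /dstar1 /formP /=.
rewrite big1; last by move=> s _; rewrite mulmx0 br_x0.
under eq_bigr do rewrite br_epsDs_p.
rewrite mkA_sum !big1_eq add0r; congr mkA.
apply/matrixP => s j; rewrite summxE mxE.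
rewrite (eq_bigr (fun k => - (I s *m P^T) k k)); last by move=> k _; rewrite mxE mulmxA dot_eMe.
rewrite sumrN; have -> : \sum_k (I s *m P^T) k k = \tr (I s *m P^T) by [].
by rewrite hP mxtrace_mulC trPI // oppr0.
Qed.
Lemma trB (A B : 'M[R]_N) : (A - B)^T = A^T - B^T.
Proof. by apply/matrixP => i j; rewrite !mxE. Qed.
Lemma trNv (v : 'cV[R]_N) : (- v)^T = - v^T.
Proof. by apply/matrixP => i j; rewrite !mxE. Qed.
Lemma Epart (P : 'M[R]_N) (x : 'cV[R]_3) : P^T = P ->
  \sum_(a < N) - brDDs I (- brVDs I x (P^T *m e a)) (e a)
  + 2^-1 *: \sum_(a < N) (brDDs I (- brVDs I x (e a)) (P^T *m e a)
                           - brDDs I (e a) (P^T *m (- brVDs I x (e a)))) = 0.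
Proof.
move=> hP; set J := \sum_(s < 3) x s 0 *: I s.
have T1 : \sum_(a < N) - brDDs I (- brVDs I x (P^T *m e a)) (e a) = - G (- (J *m P)).
  rewrite sumrN; congr (- _).
  rewrite (eq_bigr (fun a => G (- (J *m P^T) *m (e a *m (e a)^T)))); last first.
    by move=> a _; rewrite brVDs_J brDDs_G !mulmxA !mulNmx.
  by rewrite G_sum -mulmx_sumr sum_ee mulmx1 hP.
have T2 : \sum_(a < N) brDDs I (- brVDs I x (e a)) (P^T *m e a) = G (- (J *m P)).
  rewrite (eq_bigr (fun a => G (- J *m (e a *m (e a)^T) *m P))); last first.
    by move=> a _; rewrite brVDs_J brDDs_G trmx_mul trmxK !mulmxA !mulNmx.
  by rewrite G_sum -mulmx_suml -mulmx_sumr sum_ee mulmx1 mulNmx.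
have T3 : \sum_(a < N) brDDs I (e a) (P^T *m (- brVDs I x (e a))) = G (J *m P).
  rewrite (eq_bigr (fun a => G (e a *m (e a)^T *m (J *m P)))); last first.
    move=> a _; rewrite brVDs_J brDDs_G mulmxN trNv !trmx_mul trmxK JT.
    by rewrite !(mulmxN, mulNmx) opprK !mulmxA.
  by rewrite G_sum -mulmx_suml sum_ee mul1mx.
rewrite T1 sumrB T2 T3 !G_N opprK -opprD scalerN -mulr2n -scaler_nat scalerA mulVf ?pnatr_eq0 //.
by rewrite scale1r subrr.
Qed.
Lemma Dspart (P : 'M[R]_N) (u : 'cV[R]_N) : P^T = P ->
  \sum_(s < 3) - (2%:R *: (I s *m (I s *m (P^T *m u))))
  + \sum_(a < N) - brEDs (brDDs I (e a) (P^T *m u) - brDDs I u (P^T *m e a)) (e a)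
  = (P *m u) *+ 6 + ((P *m u) *+ (N + 6) - ((P *m u) *+ 2 + ((\sum_(s < 3) I s *m P *m I s) *m u) *+ 2 - \tr P *: u)).
Proof.
move=> hP.
rewrite (eq_bigr (fun=> (P *m u) *+ 2)); last first.
  by move=> s _; rewrite mulmxA Isq mulNmx mul1mx hP scalerN opprK scaler_nat.
rewrite sumr_const card_ord -mulrnA.
rewrite (eq_bigr (fun a => (G (e a *m (P *m u)^T))^T *m e a - (G (u *m (P *m e a)^T))^T *m e a)); last first.
  by move=> a _; rewrite /brEDs opprK !brDDs_G hP (trB (G _) (G _)) mulmxBl.
by rewrite sumrB LA LB.
Qed.
Section Box.
Variable P : 'M[R]_N.
Hypothesis hP : P^T = P.
Variable X : Tan R n.
Lemma S1 : \sum_(s < 3) br I (epsVs R n s) (d1 I (formP P) (epsV R n s) X)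
  = mkA 0 0 0 (\sum_(s < 3) - (2%:R *: (I s *m (I s *m (P^T *m X.2))))) 0.
Proof.
rewrite (eq_bigr (fun s => mkA 0 0 0 (- (2%:R *: (I s *m (I s *m (P^T *m X.2))))) 0)); last first.
  move=> s _; rewrite Kd1 /epsV /= brVDs_e mulmx0 brVDs0r brDDs0l brDDs0r subr0 oppr0.
  by rewrite addr0 br_epsVs_D brDVs_e.
by rewrite (@mkA_sum 3) !big1_eq.
Qed.
Lemma S2 : \sum_(a < N) br I (epsDs R a) (d1 I (formP P) (epsD R a) X)
  = mkA 0 0 (\sum_(a < N) - brDDs I (- brVDs I X.1 (P^T *m e a)) (e a))
      (\sum_(a < N) - brEDs (brDDs I (e a) (P^T *m X.2) - brDDs I X.2 (P^T *m e a)) (e a)) 0.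
Proof.
rewrite (eq_bigr (fun a => mkA 0 0 (- brDDs I (- brVDs I X.1 (P^T *m e a)) (e a))
      (- brEDs (brDDs I (e a) (P^T *m X.2) - brDDs I X.2 (P^T *m e a)) (e a)) 0)); last first.
  by move=> a _; rewrite Kd1 /epsD /= brVDs0l sub0r br_epsDs_DE.
by rewrite (@mkA_sum N) !big1_eq.
Qed.
Lemma S3 : \sum_(s < 3) d1 I (formP P) (minus (br I (epsVs R n s) (ofTan X))) (epsV R n s) = mkA 0 0 0 0 0.
Proof.
rewrite big1 // => s _; rewrite minus_Vs Kd1 /epsV /= !mulmx0.
by rewrite brVDs0l brVDs0r !subrr.
Qed.
Lemma S4 : \sum_(a < N) d1 I (formP P) (minus (br I (epsDs R a) (ofTan X))) (epsD R a)
  = mkA 0 0 (\sum_(a < N) (brDDs I (- brVDs I X.1 (e a)) (P^T *m e a) - brDDs I (e a) (P^T *m (- brVDs I X.1 (e a))))) 0 0.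
Proof.
rewrite (eq_bigr (fun a => mkA 0 0 (brDDs I (- brVDs I X.1 (e a)) (P^T *m e a) - brDDs I (e a) (P^T *m (- brVDs I X.1 (e a)))) 0 0)); last first.
  by move=> a _; rewrite minus_Ds Kd1 /epsD /= !brVDs0l subr0.
by rewrite (@mkA_sum N) !big1_eq.
Qed.
Lemma Box_form : Box I (formP P) X = mkA 0 0 0
  ((P *m X.2) *+ 6 + ((P *m X.2) *+ (N + 6) - ((P *m X.2) *+ 2 + ((\sum_(s < 3) I s *m P *m I s) *m X.2) *+ 2 - \tr P *: X.2))) 0.
Proof.
rewrite /Box dstar1_0 // /d0 br_x0 /dstar2 S1 S2 S3 S4.
apply: Alg_eq; rewrite !(aVD, aDD, aED, aDsD, aVsD, aVZ, aDZ, aEZ, aDsZ, aVsZ, aVm, aDm, aEm, aDsm, aVsm) ?scaler0 ?addr0 ?add0r //.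
all: try exact: scaler0.
  exact: Epart.
have z : (2^-1 : R) *: (0 : 'cV[R]_N) = 0 := scaler0 _ _.
rewrite z addr0; exact: Dspart.
Qed.
End Box.
Lemma S_Isum (P : 'M[R]_N) : \sum_(s < 3) I s *m P *m I s = - \sum_(s < 3) (I s)^T *m P *m I s.
Proof. by rewrite -sumrN; apply: eq_bigr => s _; rewrite Iskew !mulNmx opprK. Qed.
Lemma mulmxMn k (A : 'M[R]_N) (u : 'cV[R]_N) : (A *+ k) *m u = (A *m u) *+ k.
Proof. by elim: k => [|k IH]; rewrite ?mulr0n ?mul0mx // !mulrS mulmxDl IH. Qed.
Lemma mv2 (V : zmodType) (A B C K t Z : V) : A + B + t + K = Z + C -> A + (B - (C + - K - t)) = Z.
Proof.
move=> h; have -> : Z = A + B + t + K - C by rewrite h addrK.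
by rewrite opprB opprD opprK !addrA addrAC.
Qed.
Lemma mv (V : zmodType) (A B C t Z : V) : A + B + t = Z + C -> A + (B - (C - t)) = Z.
Proof.
move=> h; have -> : Z = A + B + t - C by rewrite h addrK.
by rewrite opprB !addrA.
Qed.
Lemma case1 (P : 'M[R]_N) : P^T = P -> \tr P = 0 ->
  \sum_(s < 3) (I s)^T *m P *m I s = - P ->
  forall X, Box I (formP P) X = formP ((4 * (n + 2))%:R *: P) X.
Proof.
move=> hP ht hI X; rewrite Box_form // /formP; congr (mkA _ _ _ _ _).
rewrite S_Isum hI opprK ht scale0r (trZ _ P) hP -scalemxAl scaler_nat.
apply: mv; rewrite addr0 -!mulrnDr; congr (_ *+ _).
rewrite -?plusE -?minusE -?multE; lia.
Qed.
Lemma case2 (P : 'M[R]_N) : P^T = P -> \tr P = 0 ->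
  \sum_(s < 3) (I s)^T *m P *m I s = 3%:R *: P ->
  forall X, Box I (formP P) X = formP ((4 * (n + 4))%:R *: P) X.
Proof.
move=> hP ht hI X; rewrite Box_form // /formP; congr (mkA _ _ _ _ _).
rewrite (trZ _ P) hP -scalemxAl scaler_nat S_Isum hI mulNmx -scalemxAl scaler_nat mulNrn ht scale0r.
apply: mv2; rewrite addr0 -mulrnA -!mulrnDr; congr (_ *+ _).
rewrite -?plusE -?minusE -?multE; lia.
Qed.
Lemma case3 X : Box I (formP (1%:M : 'M[R]_N)) X = formP ((8 * (n + 2))%:R *: (1%:M : 'M[R]_N)) X.
Proof.
rewrite Box_form ?trmx1 // /formP; congr (mkA _ _ _ _ _).
rewrite (eq_bigr (fun=> - 1%:M)); last by move=> s _; rewrite mulmx1 Isq.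
rewrite sumrN sumr_const card_ord mulNmx mulmxMn !mul1mx mulNrn mxtrace1 scaler_nat.
rewrite (trZ _ 1%:M) trmx1 -scalemxAl mul1mx scaler_nat.
apply: mv2; rewrite -mulrnA -!mulrnDr; congr (_ *+ _).
rewrite -?plusE -?minusE -?multE; lia.
Qed.
End P.

Unset Implicit Arguments.
Theorem lemma4p2 (R : realFieldType) (n : nat) (I : 'I_3 -> 'M[R]_(4 * n)) :
  (0 < n)%N -> qc_fibre I ->
  (forall P : 'M[R]_(4 * n), P^T = P -> \tr P = 0 ->
     \sum_(s < 3) (I s)^T *m P *m I s = - P ->
     forall X, Box I (formP P) X = formP ((4 * (n + 2))%:R *: P) X) /\
  (forall P : 'M[R]_(4 * n), P^T = P -> \tr P = 0 ->
     \sum_(s < 3) (I s)^T *m P *m I s = 3%:R *: P ->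
     forall X, Box I (formP P) X = formP ((4 * (n + 4))%:R *: P) X) /\
  (forall X, Box I (formP (1%:M : 'M[R]_(4 * n))) X
             = formP ((8 * (n + 2))%:R *: (1%:M : 'M[R]_(4 * n))) X).
Proof.
move=> _ [Isk [Isq _]].
split; first exact: (case1 Isk Isq).
split; first exact: (case2 Isk Isq).
exact: (case3 Isk Isq).
Qed.
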